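(* Under the standing assumptions below, let $\lambda\in c_H$ and suppose $k(\lambda)$ is well defined and belongs to $\ell^q$ for some $1\le q<\infty$. Then $\lim_{N\to\infty}\|k(\lambda;N)-k(\lambda)\|_{\ell^q}=0$.
   Context: Standing assumptions: $a=(a_n)$ strictly decreasing positive reals with $a_n\to0$; $b_n\ne0$ for all $n$. $c_H:=\{(\lambda_n)\in c_0\mid\operatorname{re}\lambda_n\le0\ \forall n\}$. $k_n(\lambda):=-\frac{a_n-\lambda_n}{b_n}\prod_{m\ge1,\,m\neq n}\frac{1-\lambda_m/a_n}{1-a_m/a_n}$. For $N\in\mathbb{N}$, $k(\lambda;N)$ is the eventually zero sequence with $k_n(\lambda;N):=-\frac{a_n-\lambda_n}{b_n}\prod_{m=1,\,m\ne n}^N\frac{1-\lambda_m/a_n}{1-a_m/a_n}$ for $1\le n\le N$ and $k_n(\lambda;N):=0$ for $n>N$. *)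

(* Defs.v *)
From Stdlib Require Import Reals.
From Coquelicot Require Import Coquelicot.
Open Scope R_scope.

(* Sequences are indexed from 0 (index n here = index n+1 in the paper). *)

(* |x|^q for x >= 0 and real q >= 1, with the convention 0^q = 0. *)
Definition rpow (x q : R) : R := if Req_EM_T x 0 then 0 else Rpower x q.

Definition in_cH (lam : nat -> C) : Prop :=
  filterlim lam eventually (locally (RtoC 0)) /\ forall n, Re (lam n) <= 0.

Fixpoint prodC (f : nat -> C) (N : nat) : C :=
  match N with
  | O => RtoC 1
  | S N' => Cmult (prodC f N') (f N')
  end.

Definition kfactor (a : nat -> R) (lam : nat -> C) (n m : nat) : C :=
  if Nat.eqb m n then RtoC 1
  else Cdiv (Cminus (RtoC 1) (Cdiv (lam m) (RtoC (a n))))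
            (Cminus (RtoC 1) (RtoC (a m / a n))).

Definition partial_prod (a : nat -> R) (lam : nat -> C) (n N : nat) : C :=
  prodC (kfactor a lam n) N.

Definition kpre (a : nat -> R) (b lam : nat -> C) (n : nat) : C :=
  Copp (Cdiv (Cminus (RtoC (a n)) (lam n)) (b n)).

Definition kN (a : nat -> R) (b lam : nat -> C) (N n : nat) : C :=
  if Nat.ltb n N then Cmult (kpre a b lam n) (partial_prod a lam n N)
  else RtoC 0.

Definition in_lq (q : R) (x : nat -> C) : Prop :=
  ex_series (fun n => rpow (Cmod (x n)) q).
Definition lq_norm (q : R) (x : nat -> C) : R :=
  rpow (Series (fun n => rpow (Cmod (x n)) q)) (/ q).

(* Main.v *)
Require Import Defs.
From Stdlib Require Import Reals Lra Lia.
From Coquelicot Require Import Coquelicot.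
Open Scope R_scope.

Lemma rpow_nonneg x q : 0 <= rpow x q.
Proof. unfold rpow; destruct (Req_EM_T x 0); [lra|]. unfold Rpower; left; apply exp_pos. Qed.

Lemma rpow_le x y q : 0 <= x <= y -> 0 <= q -> rpow x q <= rpow y q.
Proof.
  intros [H1 H2] Hq. unfold rpow.
  destruct (Req_EM_T x 0).
  - destruct (Req_EM_T y 0); [lra|]. unfold Rpower; left; apply exp_pos.
  - destruct (Req_EM_T y 0); [lra|]. apply Rle_Rpower_l; lra.
Qed.

Lemma rpow_scal c x q : 0 < c -> 0 <= x -> rpow (c * x) q = Rpower c q * rpow x q.
Proof.
  intros Hc Hx. unfold rpow.
  destruct (Req_EM_T x 0).
  - subst. rewrite Rmult_0_r. destruct (Req_EM_T 0 0); [ring|lra].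
  - destruct (Req_EM_T (c*x) 0).
    + exfalso. assert (0 < c*x) by (apply Rmult_lt_0_compat; lra). lra.
    + rewrite Rpower_mult_distr; lra.
Qed.

Lemma rpow_lim0 (u : nat -> R) p : 0 < p -> (forall N, 0 <= u N) -> is_lim_seq u 0 ->
  is_lim_seq (fun N => rpow (u N) p) 0.
Proof.
  intros Hp Hu Hl. apply is_lim_seq_spec. apply is_lim_seq_spec in Hl.
  intros eps.
  assert (He2 : 0 < eps/2) by (destruct eps; simpl; lra).
  set (d := Rpower (eps/2) (/p)).
  assert (Hd : 0 < d) by (unfold d, Rpower; apply exp_pos).
  destruct (Hl (mkposreal d Hd)) as [N0 HN0].
  exists N0. intros N HN. specialize (HN0 N HN). simpl in HN0.
  rewrite Rminus_0_r in HN0 |- *. rewrite Rabs_pos_eq in HN0 by apply Hu.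
  rewrite Rabs_pos_eq by apply rpow_nonneg.
  unfold rpow. destruct (Req_EM_T (u N) 0). { destruct eps; simpl; lra. }
  assert (Rpower (u N) p <= Rpower d p).
  { apply Rle_Rpower_l; [lra|]. specialize (Hu N). lra. }
  unfold d in H. rewrite Rpower_mult in H. rewrite Rinv_l in H by lra.
  rewrite Rpower_1 in H by lra. lra.
Qed.

Lemma sum_lim0 (f : nat -> nat -> R) k : (forall n, is_lim_seq (fun N => f N n) 0) ->
  is_lim_seq (fun N => sum_f_R0 (f N) k) 0.
Proof.
  intros H. induction k; simpl.
  - apply H.
  - replace (Finite 0) with (Finite (0+0)) by (f_equal; ring).
    apply is_lim_seq_plus'; auto.
Qed.

Lemma dct (f : nat -> nat -> R) (g : nat -> R) :
  (forall N n, 0 <= f N n <= g n) -> ex_series g ->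
  (forall n, is_lim_seq (fun N => f N n) 0) ->
  is_lim_seq (fun N => Series (f N)) 0.
Proof.
  intros Hfg Hg Hl.
  assert (Hex : forall N, ex_series (f N)).
  { intros N. apply (ex_series_le (V:=R_CompleteNormedModule)) with g; auto.
    intros n. change (Rabs (f N n) <= g n). rewrite Rabs_pos_eq; apply Hfg. }
  apply is_lim_seq_spec. intros eps.
  assert (He2 : 0 < eps/2) by (destruct eps; simpl; lra).
  pose proof (Series_correct _ Hg) as Hs.
  unfold is_series in Hs.
  destruct (proj1 (filterlim_locally _ _) Hs (mkposreal _ He2)) as [M1 HM1]. specialize (HM1 M1 (Nat.le_refl _)).
  change (Rabs (sum_n g M1 - Series g) < eps/2) in HM1.
  rewrite sum_n_Reals in HM1.
  assert (HT : Series g = sum_f_R0 g M1 + Series (fun k => g (S M1 + k)%nat)).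
  { apply (Series_incr_n g (S M1)); [lia|auto]. }
  pose proof (sum_lim0 f M1 Hl) as HS. apply is_lim_seq_spec in HS.
  destruct (HS (mkposreal _ He2)) as [N0 HN0].
  exists N0. intros N HN. specialize (HN0 N HN). simpl in HN0.
  rewrite Rminus_0_r in HN0 |- *.
  assert (Hfi : Series (f N) = sum_f_R0 (f N) M1 + Series (fun k => f N (S M1 + k)%nat)).
  { apply (Series_incr_n (f N) (S M1)); [lia|auto]. }
  assert (Hle : Series (fun k => f N (S M1 + k)%nat) <= Series (fun k => g (S M1 + k)%nat)).
  { apply Series_le. intros; apply Hfg. apply (ex_series_incr_n g (S M1)); auto. }
  assert (H0 : 0 <= Series (f N)).
  { assert (Series (fun _ => 0) <= Series (f N)) by (apply Series_le; [intros; split; [lra|apply Hfg]|auto]).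
    assert (E : Series (fun _ => 0) = 0 * Series (f N)).
    { rewrite <- Series_scal_l. apply Series_ext; intros; simpl; ring. }
    rewrite E, Rmult_0_l in H; auto. }
  assert (0 <= sum_f_R0 (f N) M1).
  { apply cond_pos_sum. intros; apply Hfg. }
  rewrite Rabs_pos_eq by auto. rewrite Rabs_pos_eq in HN0 by auto.
  apply Rabs_def2 in HM1. lra.
Qed.

Lemma a_strict (a : nat -> R) : (forall n, a (S n) < a n) -> forall n m, (n < m)%nat -> a m < a n.
Proof.
  intros H n m Hnm. induction Hnm.
  - apply H.
  - specialize (H m). lra.
Qed.

Lemma kfactor_ge1 (a : nat -> R) (lam : nat -> C) n m :
  (forall n, 0 < a n) -> (forall n, a (S n) < a n) -> Re (lam m) <= 0 -> (n < m)%nat ->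
  1 <= Cmod (kfactor a lam n m).
Proof.
  intros Hp Hd Hr Hnm. unfold kfactor.
  replace (Nat.eqb m n) with false by (symmetry; apply Nat.eqb_neq; lia).
  pose proof (a_strict a Hd n m Hnm) as Hlt. pose proof (Hp n). pose proof (Hp m).
  assert (Hq : 0 < a m / a n < 1).
  { split. apply Rdiv_lt_0_compat; lra. apply Rlt_div_l; lra. }
  assert (Hden : (RtoC 1 - RtoC (a m / a n))%C = RtoC (1 - a m / a n)) by (rewrite RtoC_minus; auto).
  rewrite Hden. rewrite Cmod_div.
  2:{ intro E. apply RtoC_inj in E. lra. }
  rewrite Cmod_R. rewrite Rabs_pos_eq by lra.
  assert (Hnum : 1 <= Cmod (RtoC 1 - lam m / RtoC (a n))%C).
  { eapply Rle_trans; [|apply re_le_Cmod]. eapply Rle_trans; [|apply Rle_abs].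
    destruct (lam m) as [u v]. simpl in Hr.
    unfold Cminus, Cdiv, Cmult, Cinv, Cplus, Copp, RtoC; simpl.
    assert (E : u * (a n / (a n * (a n * 1) + 0 * (0 * 1))) - v * (- 0 / (a n * (a n * 1) + 0 * (0 * 1))) = u / a n)
      by (field; lra).
    rewrite E. assert (u / a n <= 0).
    { unfold Rdiv. apply Rmult_le_0_r; [lra|]. left; apply Rinv_0_lt_compat; lra. }
    lra. }
  apply Rle_trans with (Cmod (RtoC 1 - lam m / RtoC (a n))%C); auto.
  apply Rle_div_r; [lra|].
  pose proof (Cmod_ge_0 (RtoC 1 - lam m / RtoC (a n))%C). nra.
Qed.

Lemma pp_mono (a : nat -> R) (lam : nat -> C) n N :
  (forall n, 0 < a n) -> (forall n, a (S n) < a n) -> (forall m, Re (lam m) <= 0) -> (n < N)%nat ->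
  forall k, Cmod (partial_prod a lam n N) <= Cmod (partial_prod a lam n (N + k)).
Proof.
  intros Hp Hd Hr HnN k. induction k.
  - rewrite Nat.add_0_r; lra.
  - rewrite Nat.add_succ_r. unfold partial_prod at 2. simpl. rewrite Cmod_mult.
    fold (partial_prod a lam n (N + k)).
    pose proof (kfactor_ge1 a lam n (N + k) Hp Hd (Hr _) ltac:(lia)).
    pose proof (Cmod_ge_0 (partial_prod a lam n (N + k))). nra.
Qed.

Lemma pp_conv (f : nat -> C) (l : C) :
  filterlim f eventually (locally l) -> is_lim_seq (fun N => Cmod (f N - l)%C) 0.
Proof.
  intros H. apply is_lim_seq_spec. intros eps.
  pose proof (norm_factor_gt_0 (K:=R_AbsRing) (V:=prod_NormedModule R_AbsRing R_NormedModule R_NormedModule)) as Hnf.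
  assert (He : 0 < eps / norm_factor (K:=R_AbsRing) (V:=prod_NormedModule R_AbsRing R_NormedModule R_NormedModule)).
  { apply Rdiv_lt_0_compat; [apply cond_pos|auto]. }
  destruct (proj1 (filterlim_locally _ _) H (mkposreal _ He)) as [N0 HN0].
  exists N0. intros N HN. specialize (HN0 N HN).
  pose proof (norm_compat2 (K:=R_AbsRing) (V:=prod_NormedModule R_AbsRing R_NormedModule R_NormedModule) l (f N) (mkposreal _ He) HN0) as Hc.
  simpl in Hc. rewrite Rminus_0_r, Rabs_pos_eq by apply Cmod_ge_0.
  rewrite Cmod_norm. replace (eps : R) with (norm_factor (K:=R_AbsRing) (V:=prod_NormedModule R_AbsRing R_NormedModule R_NormedModule) * (eps / norm_factor (K:=R_AbsRing) (V:=prod_NormedModule R_AbsRing R_NormedModule R_NormedModule))) by (field; lra).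
  exact Hc.
Qed.

Lemma Cmod_rev (x y : C) : Rabs (Cmod x - Cmod y) <= Cmod (x - y)%C.
Proof.
  assert (H1 : Cmod x <= Cmod (x - y)%C + Cmod y).
  { replace x with ((x - y) + y)%C at 1 by ring. apply Cmod_triangle. }
  assert (H2 : Cmod y <= Cmod (x - y)%C + Cmod x).
  { replace y with (-(x - y) + x)%C at 1 by ring. rewrite <- (Cmod_opp (x - y)%C). apply Cmod_triangle. }
  apply Rabs_le; lra.
Qed.

Lemma pp_bound (a : nat -> R) (lam : nat -> C) (P : C) n N :
  (forall n, 0 < a n) -> (forall n, a (S n) < a n) -> (forall m, Re (lam m) <= 0) -> (n < N)%nat ->
  filterlim (fun M => partial_prod a lam n M) eventually (locally P) ->
  Cmod (partial_prod a lam n N) <= Cmod P.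
Proof.
  intros Hp Hd Hr HnN HP.
  pose proof (pp_conv _ _ HP) as Hc.
  assert (Hm : is_lim_seq (fun M => Cmod (partial_prod a lam n M)) (Cmod P)).
  { apply is_lim_seq_spec. apply is_lim_seq_spec in Hc. intros eps.
    destruct (Hc eps) as [N0 HN0]. exists N0. intros M HM. specialize (HN0 M HM).
    rewrite Rminus_0_r, Rabs_pos_eq in HN0 by apply Cmod_ge_0.
    eapply Rle_lt_trans; [apply Cmod_rev|auto]. }
  apply (is_lim_seq_incr_n _ N) in Hm.
  assert (Hk : forall k, Cmod (partial_prod a lam n N) <= Cmod (partial_prod a lam n (k + N))).
  { intros k. rewrite Nat.add_comm. apply (pp_mono a lam n N Hp Hd Hr HnN k). }
  assert (Hl := is_lim_seq_le (fun _ => Cmod (partial_prod a lam n N)) _ _ _ Hk (is_lim_seq_const _) Hm).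
  simpl in Hl. exact Hl.
Qed.

Lemma Series_nonneg (f : nat -> R) (g : nat -> R) :
  (forall n, 0 <= f n <= g n) -> ex_series g -> 0 <= Series f.
Proof.
  intros H Hg.
  assert (Series (fun _ => 0) <= Series f) by (apply Series_le; [intros; split; [lra|apply H]|]; apply (ex_series_le (V:=R_CompleteNormedModule)) with g; auto; intros n; change (Rabs (f n) <= g n); rewrite Rabs_pos_eq; apply H).
  assert (E : Series (fun _ => 0) = 0 * Series f).
  { rewrite <- Series_scal_l. apply Series_ext; intros; simpl; ring. }
  rewrite E, Rmult_0_l in H0; auto.
Qed.

Theorem proposition1
  (a : nat -> R) (b : nat -> C) (lam : nat -> C) (P : nat -> C) (q : R)
  (ha_pos : forall n, 0 < a n)
  (ha_dec : forall n, a (S n) < a n)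
  (ha_lim : is_lim_seq a 0)
  (hb : forall n, b n <> RtoC 0)
  (hlam : in_cH lam)
  (hP : forall n, filterlim (fun N => partial_prod a lam n N) eventually (locally (P n)))
  (hq : 1 <= q)
  (hk : in_lq q (fun n => Cmult (kpre a b lam n) (P n))) :
  is_lim_seq
    (fun N => lq_norm q (fun n => Cminus (kN a b lam N n) (Cmult (kpre a b lam n) (P n))))
    0.
Proof.
  destruct hlam as [_ hRe].
  assert (Hq0 : 0 < q) by lra.
  set (k := fun n => Cmult (kpre a b lam n) (P n)) in *.
  set (f := fun N n => rpow (Cmod (Cminus (kN a b lam N n) (k n))) q).
  set (g := fun n => Rpower 2 q * rpow (Cmod (k n)) q).
  assert (Hb2 : forall N n, Cmod (Cminus (kN a b lam N n) (k n)) <= 2 * Cmod (k n)).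
  { intros N n. unfold kN, k. destruct (Nat.ltb n N) eqn:E.
    - apply Nat.ltb_lt in E.
      replace (Cminus (Cmult (kpre a b lam n) (partial_prod a lam n N)) (Cmult (kpre a b lam n) (P n)))
        with (Cmult (kpre a b lam n) (Cminus (partial_prod a lam n N) (P n))) by ring.
      rewrite !Cmod_mult.
      assert (Cmod (Cminus (partial_prod a lam n N) (P n)) <= Cmod (partial_prod a lam n N) + Cmod (P n)).
      { unfold Cminus. rewrite <- (Cmod_opp (P n)). apply Cmod_triangle. }
      pose proof (pp_bound a lam (P n) n N ha_pos ha_dec hRe E (hP n)).
      pose proof (Cmod_ge_0 (kpre a b lam n)). nra.
    - replace (Cminus (RtoC 0) (Cmult (kpre a b lam n) (P n))) with (Copp (Cmult (kpre a b lam n) (P n))) by ring.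
      rewrite Cmod_opp. pose proof (Cmod_ge_0 (Cmult (kpre a b lam n) (P n))). lra. }
  assert (Hfg : forall N n, 0 <= f N n <= g n).
  { intros N n. split; [apply rpow_nonneg|]. unfold f, g.
    rewrite <- rpow_scal by (lra || apply Cmod_ge_0).
    apply rpow_le; [split; [apply Cmod_ge_0|apply Hb2]|lra]. }
  assert (Hg : ex_series g).
  { unfold g. apply (ex_series_scal_l (V:=R_NormedModule) (Rpower 2 q) (fun n => rpow (Cmod (k n)) q)). exact hk. }
  assert (Hpt : forall n, is_lim_seq (fun N => f N n) 0).
  { intros n. unfold f. apply rpow_lim0; [lra|intros; apply Cmod_ge_0|].
    apply is_lim_seq_ext_loc with (fun N => Cmod (kpre a b lam n) * Cmod (Cminus (partial_prod a lam n N) (P n))).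
    - exists (S n). intros N HN. unfold kN, k.
      replace (Nat.ltb n N) with true by (symmetry; apply Nat.ltb_lt; lia).
      rewrite <- Cmod_mult. f_equal. ring.
    - replace (Finite 0) with (Rbar_mult (Cmod (kpre a b lam n)) 0) by (simpl; f_equal; ring).
      apply is_lim_seq_scal_l. apply pp_conv. apply hP. }
  pose proof (dct f g Hfg Hg Hpt) as HS.
  unfold lq_norm. apply rpow_lim0; [apply Rinv_0_lt_compat; lra| |exact HS].
  intros N. apply Series_nonneg with g; auto. intros n; apply (Hfg N n).
Qed.
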